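(* Let $G_N=(V,E)$ be a connected, undirected, edge-weighted graph on $N$ nodes, $u\in V$ an initial mutant node, and $r\ge 1$. Then one of the following holds: (1) $\gamma^{\mathrm{Bd}}_r(G_N,u)<\gamma^{\mathrm{Bd}}_r(K_N)$; (2) $\gamma^{\mathrm{dB}}_r(G_N,u)<\gamma^{\mathrm{dB}}_r(K_N)$; (3) $\gamma^{\mathrm{Bd}}_r(G_N,u)=\gamma^{\mathrm{Bd}}_r(K_N)$ and $\gamma^{\mathrm{dB}}_r(G_N,u)=\gamma^{\mathrm{dB}}_r(K_N)$.
   Context: Each edge $\{u,v\}$ has a positive weight $w(u,v)$ and $\deg(u)=\sum_{v} w(u,v)$. Each node is occupied by a resident (fitness 1) or a mutant (fitness $r\ge 1$); $f(u)$ is the fitness at $u$ and $F=\sum_u f(u)$. Moran Birth-death (Bd) process: each step a node $u$ is chosen with probability $f(u)/F$ and its offspring replaces a neighbor $v$ chosen with probability $w(u,v)/\deg(u)$. Moran death-Birth (dB) process: each step a uniformly random node $v$ dies and is replaced by the offspring of a neighbor $u$ chosen with probability $f(u)w(u,v)/\sum_{u'}f(u')w(u',v)$. For a process $p\in\{\mathrm{Bd},\mathrm{dB}\}$, $\gamma^{p}_r(G_N,u)$ is the probability that, starting with a single mutant at $u$ (all other nodes residents), the first step that changes the set of mutant nodes is one in which the mutant at $u$ places its offspring onto a neighboring node (increasing the number of mutants), as opposed to the mutant at $u$ being replaced by a resident. $K_N$ is the unweighted complete graph on $N$ nodes; $\gamma^p_r(K_N)$ is this quantity on $K_N$ (independent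 of the node). *)

(* Defs.v *)
From HB Require Import structures.
From mathcomp Require Import all_boot all_order all_algebra.
Set Implicit Arguments. Unset Strict Implicit. Unset Printing Implicit Defensive.
Import Order.TTheory GRing.Theory Num.Theory.
Local Open Scope ring_scope.

(* A weighted graph on the finite node set T is given by a weight function
   w : T -> T -> R; {x,y} is an edge iff 0 < w x y. *)

Definition wgraph (R : realFieldType) (T : finType) (w : T -> T -> R) : Prop :=
  [/\ forall x y, w x y = w y x,
      forall x y, 0 <= w x y,
      forall x, w x x = 0 &
      forall x y, connect (fun a b => 0 < w a b) x y].

Section Moran.
Variables (R : realFieldType) (T : finType) (w : T -> T -> R) (r : R) (u : T).

Definition deg (x : T) : R := \sum_y w x y.

(* fitness in the configuration with a single mutant at u *)
Definition fit (x : T) : R := if x == u then r else 1.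

Definition totfit : R := \sum_x fit x.

(* Birth-death: probability that in one step a reproduces and its
   offspring replaces b *)
Definition Bd_step (a b : T) : R := fit a / totfit * (w a b / deg a).

(* mutant at u places offspring on a (resident) neighbour *)
Definition Bd_inc : R := \sum_(b | b != u) Bd_step u b.
(* mutant at u is replaced by a resident *)
Definition Bd_dec : R := \sum_(a | a != u) Bd_step a u.

(* death-Birth: probability that in one step v dies and is replaced by the
   offspring of a *)
Definition dB_step (v a : T) : R :=
  1 / #|T|%:R * (fit a * w a v / \sum_a' fit a' * w a' v).

Definition dB_inc : R := \sum_(v | v != u) dB_step v u.
Definition dB_dec : R := \sum_(a | a != u) dB_step u a.

(* probability that the first step changing the mutant set is an increase *)
Definition gamma_Bd : R := Bd_inc / (Bd_inc + Bd_dec).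
Definition gamma_dB : R := dB_inc / (dB_inc + dB_dec).

End Moran.

Definition complete_w (R : realFieldType) (T : finType) (x y : T) : R :=
  if x == y then 0 else 1.

(* Main.v *)
Require Import Defs.
From HB Require Import structures.
From mathcomp Require Import all_boot all_order all_algebra.
From mathcomp Require Import ring lra.
Import Order.TTheory GRing.Theory Num.Theory.
Set Implicit Arguments. Unset Strict Implicit. Unset Printing Implicit Defensive.
Local Open Scope ring_scope.

Lemma tangent (R : realFieldType) (a r c x : R) :
  0 <= a -> 0 < r -> 0 < c -> 0 <= x ->
  r * x / (1 + a * x) <= r * c / (1 + a * c) + r / (1 + a * c) ^+ 2 * (x - c).
Proof.
move=> ha hr hc hx.
have h1 : 0 < 1 + a * x by rewrite ltr_pwDl // mulr_ge0.
have h2 : 0 < 1 + a * c by rewrite ltr_pwDl // mulr_ge0 // ltW.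
rewrite -subr_ge0.
have -> : r * c / (1 + a * c) + r / (1 + a * c) ^+ 2 * (x - c) - r * x / (1 + a * x)
   = r * a * (x - c) ^+ 2 / ((1 + a * c) ^+ 2 * (1 + a * x)).
  by field; rewrite !gt_eqF.
apply: divr_ge0; first by rewrite mulr_ge0 ?sqr_ge0 // mulr_ge0 // ltW.
by rewrite mulr_ge0 ?sqr_ge0 // ltW.
Qed.

Lemma deg_pos (R : realFieldType) (T : finType) (w : T -> T -> R) (v : T) :
  (1 < #|T|)%N -> wgraph w -> 0 < deg w v.
Proof.
move=> hN [hs hn hd hc].
have [y hy] : exists y, y != v.
  apply/existsP; rewrite -negb_forall; apply/negP=> /forallP H.
  have : (#|T| <= 1)%N.
    rewrite -(card1 v); apply: subset_leq_card; apply/subsetP=> z _.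
    by rewrite inE; move: (H z).
  by rewrite leqNgt hN.
have /connectP [p hp hl] := hc v y.
case: p hp hl => [|z p] /=; first by move=> _ e; rewrite e eqxx in hy.
move=> /andP [hz _] _.
rewrite /deg (bigD1 z) //=; apply: ltr_wpDr hz.
by apply: sumr_ge0.
Qed.
Definition xw (R : realFieldType) (T : finType) (w : T -> T -> R) (u v : T) : R :=
  w u v / deg w v.
Definition Sw (R : realFieldType) (T : finType) (w : T -> T -> R) (u : T) : R :=
  \sum_(v | v != u) xw w u v.
Definition Dw (R : realFieldType) (T : finType) (w : T -> T -> R) (r : R) (u : T) : R :=
  \sum_(v | v != u) r * xw w u v / (1 + (r - 1) * xw w u v).

Lemma totfit_pos (R : realFieldType) (T : finType) (r : R) (u : T) :
  1 <= r -> 0 < totfit r u.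
Proof.
move=> hr; rewrite /totfit (bigD1 u) //= /fit eqxx.
apply: ltr_wpDr; last by lra.
by apply: sumr_ge0 => i _; rewrite /fit; case: (i == u) => //; lra.
Qed.

Lemma deg_split (R : realFieldType) (T : finType) (w : T -> T -> R) (u : T) :
  (forall x, w x x = 0) -> \sum_(b | b != u) w u b = deg w u.
Proof. by move=> hd; rewrite /deg [RHS](bigD1 u) //= hd add0r. Qed.

Lemma gBd (R : realFieldType) (T : finType) (w : T -> T -> R) (r : R) (u : T) :
  (forall x y, w x y = w y x) -> (forall x y, 0 <= w x y) -> (forall x, w x x = 0) ->
  (forall v, 0 < deg w v) -> 1 <= r ->
  gamma_Bd w r u = r / (r + Sw w u).
Proof.
move=> hs hn hd hdeg hr.
have hF := totfit_pos u hr.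
have hS : 0 <= Sw w u.
  by apply: sumr_ge0 => v _; rewrite /xw divr_ge0 // ltW.
have inc : Bd_inc w r u = r / totfit r u.
  rewrite /Bd_inc /Bd_step -mulr_sumr -mulr_suml deg_split // divff ?gt_eqF //.
  by rewrite /fit eqxx mulr1.
have dec : Bd_dec w r u = Sw w u / totfit r u.
  rewrite /Bd_dec /Sw mulr_suml; apply: eq_bigr => a ha.
  by rewrite /Bd_step /fit (negbTE ha) /xw hs mulrC div1r.
rewrite /gamma_Bd inc dec; field.
by rewrite !gt_eqF //; lra.
Qed.

Lemma den_eq (R : realFieldType) (T : finType) (w : T -> T -> R) (r : R) (u v : T) :
  (forall x y, w x y = w y x) ->
  \sum_a fit r u a * w a v = deg w v + (r - 1) * w u v.
Proof.
move=> hs.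
rewrite /deg (bigD1 u) //= [in RHS](bigD1 u) //= /fit eqxx.
rewrite (eq_bigr (fun a => w v a)); last by move=> a /negbTE ->; rewrite mul1r hs.
rewrite hs; ring.
Qed.

Lemma gdB (R : realFieldType) (T : finType) (w : T -> T -> R) (r : R) (u : T) :
  (forall x y, w x y = w y x) -> (forall x y, 0 <= w x y) -> (forall x, w x x = 0) ->
  (forall v, 0 < deg w v) -> 1 <= r ->
  gamma_dB w r u = Dw w r u / (Dw w r u + 1).
Proof.
move=> hs hn hd hdeg hr.
have hN : (0 < #|T|)%N by apply/card_gt0P; exists u.
have hN' : 0 < #|T|%:R :> R by rewrite ltr0n.
have hx : forall v, 0 <= xw w u v by move=> v; rewrite /xw divr_ge0 // ltW.
have hD : 0 <= Dw w r u.
  apply: sumr_ge0 => v _; apply: divr_ge0; first by rewrite mulr_ge0 //; lra.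
  have := hx v; have : 0 <= (r - 1) by lra.
  move=> h1 h2; have := mulr_ge0 h1 h2; lra.
have inc : dB_inc w r u = Dw w r u / #|T|%:R.
  rewrite /dB_inc /Dw mulr_suml; apply: eq_bigr => v hv.
  rewrite /dB_step den_eq // /fit eqxx /xw.
  have h1 := hdeg v; have h2 := hn u v; have h3 : 0 <= r - 1 by lra.
  have h4 := mulr_ge0 h3 h2.
  field; rewrite !gt_eqF //=; try lra.
have dec : dB_dec w r u = 1 / #|T|%:R.
  rewrite /dB_dec /dB_step -mulr_sumr.
  rewrite (eq_bigr (fun a => w u a / deg w u)); last first.
    by move=> a /negbTE ha; rewrite den_eq // hd mulr0 addr0 /fit ha mul1r hs.
  by rewrite -mulr_suml deg_split // divff ?gt_eqF // mulr1.
rewrite /gamma_dB inc dec; field.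
by rewrite !gt_eqF //; lra.
Qed.

Lemma frac_lt (R : realFieldType) (a b p q : R) :
  0 < p -> 0 < q -> a * q < b * p -> a / p < b / q.
Proof.
move=> hp hq h; rewrite ltr_pdivlMr // mulrAC ltr_pdivrMr //.
Qed.

Lemma deg_K (R : realFieldType) (T : finType) (v : T) :
  deg (@complete_w R T) v = (#|T|.-1)%:R.
Proof.
rewrite /deg (bigD1 v) //= /complete_w eqxx add0r.
rewrite (eq_bigr (fun _ => 1)); last by move=> y hy; rewrite eq_sym (negbTE hy).
by rewrite sumr_const cardC1.
Qed.

Theorem theorem2 (R : realFieldType) (T : finType) (w : T -> T -> R)
    (u : T) (r : R) :
  (1 < #|T|)%N -> wgraph w -> 1 <= r ->
  gamma_Bd w r u < gamma_Bd (@complete_w R T) r u \/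
  gamma_dB w r u < gamma_dB (@complete_w R T) r u \/
  (gamma_Bd w r u = gamma_Bd (@complete_w R T) r u /\
   gamma_dB w r u = gamma_dB (@complete_w R T) r u).
Proof.
move=> hN hw hr.
have hdeg : forall v, 0 < deg w v by move=> v; apply: deg_pos.
case: (hw) => hs hn hd _.
set K := @complete_w R T.
have hn1 : 0 < (#|T|.-1)%:R :> R by rewrite ltr0n; case: #|T| hN => [|[|]].
have hsK : forall x y, K x y = K y x by move=> x y; rewrite /K /complete_w eq_sym.
have hnK : forall x y, 0 <= K x y by move=> x y; rewrite /K /complete_w; case: (x == y).
have hdK : forall x, K x x = 0 by move=> x; rewrite /K /complete_w eqxx.
have hdegK : forall v, 0 < deg K v by move=> v; rewrite deg_K.
pose c : R := 1 / (#|T|.-1)%:R.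
have hc : 0 < c by rewrite /c divr_gt0.
have xK : forall v, v != u -> xw K u v = c.
  by move=> v hv; rewrite /xw deg_K /K /complete_w eq_sym (negbTE hv).
have SK : Sw K u = 1.
  rewrite /Sw (eq_bigr (fun _ => c)); last by move=> v hv; rewrite xK.
  by rewrite sumr_const cardC1 /c -[_ *+ _]mulr_natl mulrA mulr1 divff // gt_eqF.
have hx : forall v, 0 <= xw w u v by move=> v; rewrite /xw divr_ge0 // ltW.
have hS : 0 <= Sw w u by apply: sumr_ge0.
have hDK : 0 <= Dw K r u.
  apply: sumr_ge0 => v hv; rewrite xK //; apply: divr_ge0; first by rewrite mulr_ge0 //; lra.
  have h1 : 0 <= r - 1 by lra.
  have := mulr_ge0 h1 (ltW hc); lra.
have hD : 0 <= Dw w r u.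
  apply: sumr_ge0 => v _; apply: divr_ge0; first by rewrite mulr_ge0 //; lra.
  have h1 : 0 <= r - 1 by lra.
  have := mulr_ge0 h1 (hx v); lra.
pose k : R := r / (1 + (r - 1) * c) ^+ 2.
have hk : 0 < k.
  rewrite /k divr_gt0 //; first lra.
  rewrite exprn_gt0 //.
  have h1 : 0 <= r - 1 by lra.
  have := mulr_ge0 h1 (ltW hc); lra.
have main : Dw w r u - Dw K r u <= k * (Sw w u - Sw K u).
  rewrite /Dw /Sw -!sumrB mulr_sumr; apply: ler_sum => v hv.
  rewrite xK // lerBlDl /k.
  apply: tangent => //; lra.
rewrite (gBd u hs hn hd hdeg hr) (gBd u hsK hnK hdK hdegK hr).
rewrite (gdB u hs hn hd hdeg hr) (gdB u hsK hnK hdK hdegK hr) SK.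
have [S1|S1] := ltrP 1 (Sw w u).
  left; apply: frac_lt; try lra.
  by rewrite ltr_pM2l //; try lra.
right.
have hlt : Dw w r u < Dw K r u -> Dw w r u / (Dw w r u + 1) < Dw K r u / (Dw K r u + 1).
  move=> h; apply: frac_lt; try lra.
have [S2|S2] := ltrP (Sw w u) 1.
  left; apply: hlt.
  rewrite SK in main.
  have : k * (Sw w u - 1) < 0 by rewrite pmulr_rlt0 //; lra.
  lra.
have SE : Sw w u = 1 by lra.
have [D1|D1] := ltrP (Dw w r u) (Dw K r u); first by left; apply: hlt.
right; split; first by rewrite SE.
have : Dw w r u = Dw K r u by move: main; rewrite SE SK subrr mulr0; lra.
by move=> ->.
Qed.
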